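(* Let $S=[S_1,\ldots,S_m]$ and $R=[R_1,\ldots,R_m]$ be two sequences of propositional formulae of the same length over the alphabet $X$. The lexicographic orders $S$ and $R$ are equivalent if and only if the formula $DIFF(S,R)$ is unsatisfiable.
   Context: Models are truth assignments. For a formula $F$: $I \leq_F J$ iff $I \models F$ or $J \not\models F$. For a sequence $S=[S_1,\ldots,S_m]$: $I \leq_S J$ iff either $S=[]$, or ($I \leq_{S_1} J$ and (either $J \not\leq_{S_1} I$ or $I \leq_{S'} J$)), where $S'=[S_2,\ldots,S_m]$. Two sequences are equivalent if their orders coincide on all pairs of models over $X$. Let $X=\{x_1,\ldots,x_n\}$ and let $Y=\{y_1,\ldots,y_n\}$, $Z=\{z_1,\ldots,z_n\}$ be disjoint sets of fresh variables; $F[Y/X]$ denotes $F$ with each $x_i$ replaced by $y_i$, and $F[Z/X]$ likewise with $z_i$. Define $STRICT(G) = G[Y/X] \wedge \neg G[Z/X]$ and $EQUIV(G) = (G[Y/X] \equiv G[Z/X])$. For fresh variables $m_1,\ldots,m_m,e_1,\ldots,e_m$, define $ORDER(M,E)$ as $O_1$ where $O_{m+1}=\top$ and $O_k = m_k \vee (e_k \wedge O_{k+1})$, i.e. $ORDER(M,E)= m_1 \vee (e_1 \wedge (m_2 \vee (e_2 \wedge \cdots)))$; similarly $ORDER(N,F)$ with fresh variables $n_1,\ldots,n_m,f_1,\ldots,f_m$. With further fresh variables $a,b$, $DIFF(S,R)$ is the conjunction of: $m_i \equiv STRICT(S_i)$ and $e_i \equiv EQUIV(S_i)$ for $i=1,\ldots,m$;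 $a \equiv ORDER(M,E)$; $n_i \equiv STRICT(R_i)$ and $f_i \equiv EQUIV(R_i)$ for $i=1,\ldots,m$; $b\equiv ORDER(N,F)$; and $a \not\equiv b$. *)

(* Defs.v *)
From mathcomp Require Import all_boot.
Set Implicit Arguments. Unset Strict Implicit. Unset Printing Implicit Defensive.

Inductive form (V : Type) : Type :=
| FVar of V
| FTop
| FBot
| FNot of form V
| FAnd of form V & form V
| FOr of form V & form V
| FImp of form V & form V
| FIff of form V & form V.
Arguments FTop {V}. Arguments FBot {V}.

Fixpoint eval (V : Type) (I : V -> bool) (F : form V) : bool :=
  match F with
  | FVar x => I x
  | FTop => true
  | FBot => false
  | FNot G => ~~ eval I G
  | FAnd G H => eval I G && eval I H
  | FOr G H => eval I G || eval I H
  | FImp G H => eval I G ==> eval I H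
  | FIff G H => eval I G == eval I H
  end.

Definition models (V : Type) (I : V -> bool) (F : form V) : Prop := eval I F.

Fixpoint rename (V W : Type) (s : V -> W) (F : form V) : form W :=
  match F with
  | FVar x => FVar (s x)
  | FTop => FTop
  | FBot => FBot
  | FNot G => FNot (rename s G)
  | FAnd G H => FAnd (rename s G) (rename s H)
  | FOr G H => FOr (rename s G) (rename s H)
  | FImp G H => FImp (rename s G) (rename s H)
  | FIff G H => FIff (rename s G) (rename s H)
  end.

(* The alphabet X = {x_1..x_n} is 'I_n; models over X are 'I_n -> bool. *)
Definition model (n : nat) := 'I_n -> bool.

Definition leF (n : nat) (F : form 'I_n) (I J : model n) : Prop :=
  models I F \/ ~ models J F.

Fixpoint leS (n : nat) (S : seq (form 'I_n)) (I J : model n) : Prop :=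
  match S with
  | [::] => True
  | S1 :: S' => leF S1 I J /\ (~ leF S1 J I \/ leS S' I J)
  end.

Definition equiv_seq (n : nat) (S R : seq (form 'I_n)) : Prop :=
  forall I J : model n, leS S I J <-> leS R I J.

(* Variables of the DIFF formula: x_i, y_i, z_i (i < n), m_k, e_k, n_k, f_k
   (k < m), a, b -- all pairwise distinct (fresh). Indices are 0-based. *)
Inductive dvar : Type :=
| VX of nat | VY of nat | VZ of nat
| VM of nat | VE of nat | VN of nat | VF of nat
| VA | VB.

Definition substY (n : nat) (G : form 'I_n) : form dvar :=
  rename (fun i : 'I_n => VY (nat_of_ord i)) G.
Definition substZ (n : nat) (G : form 'I_n) : form dvar :=
  rename (fun i : 'I_n => VZ (nat_of_ord i)) G.

Definition STRICT (n : nat) (G : form 'I_n) : form dvar :=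
  FAnd (substY G) (FNot (substZ G)).
Definition EQUIV (n : nat) (G : form 'I_n) : form dvar :=
  FIff (substY G) (substZ G).

(* order_from mv ev k c = O_k for a sequence whose last index is k + c - 1:
   O = mv k \/ (ev k /\ O_{k+1}),  empty tail = top. *)
Fixpoint order_from (mv ev : nat -> dvar) (k c : nat) : form dvar :=
  match c with
  | 0 => FTop
  | c'.+1 => FOr (FVar (mv k)) (FAnd (FVar (ev k)) (order_from mv ev k.+1 c'))
  end.

(* ORDER(M,E) for m indices (O_1 in the paper's 1-based numbering). *)
Definition ORDER (mv ev : nat -> dvar) (m : nat) : form dvar :=
  order_from mv ev 0 m.

Definition bigAnd (fs : seq (form dvar)) : form dvar := foldr (@FAnd dvar) FTop fs.

Definition DIFF (n : nat) (S R : seq (form 'I_n)) : form dvar :=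
  let m := size S in
  bigAnd (
    [seq FIff (FVar (VM i)) (STRICT (nth FTop S i)) | i <- iota 0 m] ++
    [seq FIff (FVar (VE i)) (EQUIV (nth FTop S i)) | i <- iota 0 m] ++
    [:: FIff (FVar VA) (ORDER VM VE m)] ++
    [seq FIff (FVar (VN i)) (STRICT (nth FTop R i)) | i <- iota 0 m] ++
    [seq FIff (FVar (VF i)) (EQUIV (nth FTop R i)) | i <- iota 0 m] ++
    [:: FIff (FVar VB) (ORDER VN VF m);
        FNot (FIff (FVar VA) (FVar VB))]).

Definition satisfiable (V : Type) (F : form V) : Prop :=
  exists I : V -> bool, models I F.

(* Main.v *)
Require Import Defs.
From mathcomp Require Import all_boot.
Set Implicit Arguments. Unset Strict Implicit. Unset Printing Implicit Defensive.

Lemma eval_rename (V W : Type) (s : V -> W) (I : W -> bool) (F : form V) :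
  eval I (rename s F) = eval (fun x => I (s x)) F.
Proof. by elim: F => //= [G -> | G -> H -> | G -> H -> | G -> H -> | G -> H ->]. Qed.

Lemma eval_ext (V : Type) (I I' : V -> bool) (F : form V) :
  (forall x, I x = I' x) -> eval I F = eval I' F.
Proof.
move=> e; elim: F => //= [G -> | G -> H -> | G -> H -> | G -> H -> | G -> H ->] //.
Qed.

Lemma eval_bigAnd I fs : eval I (bigAnd fs) = all (eval I) fs.
Proof. by elim: fs => //= f fs ->. Qed.

Definition strictb n (G : form 'I_n) (y z : model n) := eval y G && ~~ eval z G.
Definition equivb n (G : form 'I_n) (y z : model n) := eval y G == eval z G.

Fixpoint leSb n (S : seq (form 'I_n)) (y z : model n) : bool :=
  match S with
  | [::] => true
  | G :: S' => strictb G y z || (equivb G y z && @leSb n S' y z)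
  end.

Lemma leSP n (S : seq (form 'I_n)) y z : leS S y z <-> leSb S y z.
Proof.
elim: S => [|G S IH] /=; first by split.
rewrite /leF /models /strictb /equivb.
move: IH; case: (eval y G); case: (eval z G); case: (leSb S y z) => /=;
  split; intuition; try congruence; exfalso; intuition congruence.
Qed.

Lemma STRICT_eval n (G : form 'I_n) I :
  eval I (STRICT G) = strictb G (fun i => I (VY i)) (fun i => I (VZ i)).
Proof. by rewrite /= /substY /substZ !eval_rename. Qed.

Lemma EQUIV_eval n (G : form 'I_n) I :
  eval I (EQUIV G) = equivb G (fun i => I (VY i)) (fun i => I (VZ i)).
Proof. by rewrite /= /substY /substZ !eval_rename. Qed.

Lemma iffS_eval n (G : form 'I_n) I v :
  eval I (FIff (FVar v) (STRICT G)) = (I v == strictb G (fun i => I (VY i)) (fun i => I (VZ i))).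
Proof. by rewrite -STRICT_eval. Qed.

Lemma iffE_eval n (G : form 'I_n) I v :
  eval I (FIff (FVar v) (EQUIV G)) = (I v == equivb G (fun i => I (VY i)) (fun i => I (VZ i))).
Proof. by rewrite -EQUIV_eval. Qed.

Lemma order_eval n (mv ev : nat -> dvar) I (y z : model n) (T : seq (form 'I_n)) k :
  (forall i, i < size T -> I (mv (k + i)) = strictb (nth FTop T i) y z /\
                           I (ev (k + i)) = equivb (nth FTop T i) y z) ->
  eval I (order_from mv ev k (size T)) = leSb T y z.
Proof.
elim: T k => [|G T IH] k H //=.
have [h1 h2] := H 0 isT; rewrite addn0 in h1 h2.
rewrite h1 h2 IH // => i Hi.
by rewrite addSnnS; apply: (H i.+1).
Qed.

Lemma order_of_all n (mv ev : nat -> dvar) I (T : seq (form 'I_n)) :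
  all (eval I) [seq FIff (FVar (mv i)) (STRICT (nth FTop T i)) | i <- iota 0 (size T)] ->
  all (eval I) [seq FIff (FVar (ev i)) (EQUIV (nth FTop T i)) | i <- iota 0 (size T)] ->
  eval I (order_from mv ev 0 (size T)) =
  leSb T (fun i => I (VY i)) (fun i => I (VZ i)).
Proof.
move=> H1 H2; rewrite !all_map in H1 H2; move/allP: H1 => H1; move/allP: H2 => H2; apply: order_eval => i Hi; rewrite add0n.
have Hm : i \in iota 0 (size T) by rewrite mem_iota.
have h1 : eval I (FIff (FVar (mv i)) (STRICT (nth FTop T i))) := H1 _ Hm.
have h2 : eval I (FIff (FVar (ev i)) (EQUIV (nth FTop T i))) := H2 _ Hm.
by rewrite iffS_eval in h1; rewrite iffE_eval in h2; rewrite (eqP h1) (eqP h2).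
Qed.

Theorem theorem9 (n : nat) (S R : seq (form 'I_n)) :
  size S = size R ->
  (equiv_seq S R <-> ~ satisfiable (DIFF S R)).
Proof.
move=> hsz; split.
- move=> Heq [I HI].
  move: HI; rewrite /models /DIFF eval_bigAnd !all_cat /=.
  rewrite hsz => /and5P [h1 h2 /andP [hA _] h3 /and4P [h4 hB hAB _]].
  rewrite /ORDER (order_of_all h3 h4) in hB.
  rewrite -hsz in h1 h2 hA; rewrite /ORDER (order_of_all h1 h2) in hA.
  move/eqP: hA; move/eqP: hB => hB hA.
  move: hAB; rewrite hA hB.
  have [e1 e2] := Heq (fun i => I (VY i)) (fun i => I (VZ i)).
  have -> : leSb S (fun i => I (VY i)) (fun i => I (VZ i)) = leSb R (fun i => I (VY i)) (fun i => I (VZ i)).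
    by apply/idP/idP => h; apply/leSP; [apply: e1 | apply: e2]; apply/leSP.
  by rewrite eqxx.
- move=> Hun I J.
  suff e : leSb S I J = leSb R I J.
    by split => h; apply/leSP; [rewrite -e | rewrite e]; apply/leSP.
  apply/eqP; apply/negP => hne; apply: Hun.
  pose A v := match v with
              | VY k => odflt false (omap I (insub k))
              | VZ k => odflt false (omap J (insub k))
              | VM k => strictb (nth FTop S k) I J
              | VE k => equivb (nth FTop S k) I J
              | VN k => strictb (nth FTop R k) I J
              | VF k => equivb (nth FTop R k) I J
              | VA => leSb S I J
              | VB => leSb R I J
              | VX _ => false
              end.
  have eY : forall G : form 'I_n, eval (fun i : 'I_n => A (VY i)) G = eval I G.
    by move=> G; apply: eval_ext => x /=; rewrite valK.
  have eZ : forall G : form 'I_n, eval (fun i : 'I_n => A (VZ i)) G = eval J G.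
    by move=> G; apply: eval_ext => x /=; rewrite valK.
  have hS : forall G, strictb G (fun i : 'I_n => A (VY i)) (fun i : 'I_n => A (VZ i)) = strictb G I J.
    by move=> G; rewrite /strictb eY eZ.
  have hE : forall G, equivb G (fun i : 'I_n => A (VY i)) (fun i : 'I_n => A (VZ i)) = equivb G I J.
    by move=> G; rewrite /equivb eY eZ.
  have hL : forall T, leSb T (fun i : 'I_n => A (VY i)) (fun i : 'I_n => A (VZ i)) = leSb T I J.
    by elim=> //= G T ->; rewrite hS hE.
  exists A; rewrite /models /DIFF eval_bigAnd !all_cat.
  have a1 : forall T (mv : nat -> dvar), (forall k, A (mv k) = strictb (nth FTop T k) I J) ->
     all (eval A) [seq FIff (FVar (mv i)) (STRICT (nth FTop T i)) | i <- iota 0 (size S)].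
    move=> T mv Hm; rewrite all_map; apply/allP => i _.
    by change (eval A (FIff (FVar (mv i)) (STRICT (nth FTop T i)))); rewrite iffS_eval hS Hm.
  have a2 : forall T (mv : nat -> dvar), (forall k, A (mv k) = equivb (nth FTop T k) I J) ->
     all (eval A) [seq FIff (FVar (mv i)) (EQUIV (nth FTop T i)) | i <- iota 0 (size S)].
    move=> T mv Hm; rewrite all_map; apply/allP => i _.
    by change (eval A (FIff (FVar (mv i)) (EQUIV (nth FTop T i)))); rewrite iffE_eval hE Hm.
  have b1 := a1 S VM (fun k => erefl).
  have b2 := a2 S VE (fun k => erefl).
  have b3 := a1 R VN (fun k => erefl).
  have b4 := a2 R VF (fun k => erefl).
  rewrite b1 b2 b3 b4 /=.
  rewrite /ORDER (order_of_all b1 b2) hL eqxx /=.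
  rewrite hsz in b3 b4.
  rewrite hsz (order_of_all b3 b4) hL eqxx /=.
  by rewrite andbT; apply/negP.
Qed.
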